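(* Let $C\subseteq 2^X$ be an isometric concept class and let $(c_1,\dots,c_m)$ be an ordering of all concepts of $C$; write $C_i=\{c_1,\dots,c_i\}$ for $1\le i\le m$. The following are equivalent: (1) every $C_i$ is ample; (2) for every $i$, $c_i$ is a corner of $C_i$; (3) every $C_i$ is isometric; (4) every $C_i$ is weakly isometric.
   Context: $X$ is a finite set; a concept class is $C\subseteq 2^X$. $C|Y=\{c\cap Y:c\in C\}$; $Y$ is shattered by $C$ if $C|Y=2^Y$. A cube of $2^X$ is $B=\{T\cup Z:Z\subseteq Y\}$ with $Y\subseteq X$, $T\subseteq X\setminus Y$; $Y$ is its support; a cube of $C$ is a cube $B\subseteq C$. $C$ is ample if every set shattered by $C$ is the support of a cube of $C$. A concept $c\in C$ is a corner of $C$ if it lies in exactly one inclusion-maximal cube of $C$. $G(C)$ is the graph on $C$ joining $c,c'$ when $|c\Delta c'|=1$; $d(c,c')=|c\Delta c'|$ is the Hamming distance. $C$ is isometric if $G(C)$ is connected and the graph distance in $G(C)$ equals $d(c,c')$ for all $c,c'\in C$; $C$ is weakly isometric if $G(C)$ is connected and the graph distance equals $d(c,c')$ for all $c,c'\in C$ with $d(c,c')\le 2$. *)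

(* Defs.v *)
From mathcomp Require Import all_boot.
Set Implicit Arguments. Unset Strict Implicit. Unset Printing Implicit Defensive.

Section Concepts.
Variable X : finType.
Implicit Types (C B : {set {set X}}) (c Y T Z : {set X}).

Definition trace C Y : {set {set X}} := [set c :&: Y | c in C].
Definition shattered C Y : Prop := trace C Y = powerset Y.

Definition cube_of T Y : {set {set X}} := [set T :|: Z | Z in powerset Y].
Definition is_cube_supp B Y : Prop :=
  exists T, T \subset ~: Y /\ B = cube_of T Y.
Definition is_cube B : Prop := exists Y, is_cube_supp B Y.

Definition ample C : Prop :=
  forall Y, shattered C Y -> exists B, is_cube_supp B Y /\ B \subset C.

Definition maximal_cube C B : Prop :=
  [/\ is_cube B, B \subset C &
      forall B', is_cube B' -> B' \subset C -> B \subset B' -> B' = B].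

Definition corner C c : Prop :=
  c \in C /\
  exists B, (maximal_cube C B /\ c \in B) /\
            forall B', maximal_cube C B' -> c \in B' -> B' = B.

Definition hdist c c' : nat := #|(c :\: c') :|: (c' :\: c)|.

Definition adjC C : rel {set X} :=
  fun c c' => [&& c \in C, c' \in C & hdist c c' == 1].

Definition walk C c c' (k : nat) : Prop :=
  exists p : seq {set X}, [/\ path (adjC C) c p, last c p = c' & size p = k].

Definition connectedG C : Prop :=
  forall c c', c \in C -> c' \in C -> exists k, walk C c c' k.

Definition is_gdist C c c' (k : nat) : Prop :=
  walk C c c' k /\ forall k', walk C c c' k' -> k <= k'.

Definition isometric C : Prop :=
  connectedG C /\
  forall c c', c \in C -> c' \in C -> is_gdist C c c' (hdist c c').

Definition weakly_isometric C : Prop :=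
  connectedG C /\
  forall c c', c \in C -> c' \in C -> hdist c c' <= 2 ->
    is_gdist C c c' (hdist c c').

End Concepts.

(* Main.v *)
Require Import Defs.
From mathcomp Require Import all_boot zify.
Set Implicit Arguments. Unset Strict Implicit. Unset Printing Implicit Defensive.

Section S.
Variable X : finType.
Implicit Types (C D B : {set {set X}}) (a b c x y Y T Z W : {set X}).

Definition sd x y := (x :\: y) :|: (y :\: x).

Lemma in_sd z x y : (z \in sd x y) = ((z \in x) != (z \in y)).
Proof. by rewrite !inE; case: (z \in x); case: (z \in y). Qed.

Lemma hdistE x y : hdist x y = #|sd x y|. Proof. by []. Qed.

Lemma sdC x y : sd x y = sd y x.
Proof. by apply/setP=> z; rewrite !in_sd; case: (z \in x); case: (z \in y). Qed.

Lemma sdK x y : sd x (sd x y) = y.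
Proof. by apply/setP=> z; rewrite !in_sd; case: (z \in x); case: (z \in y). Qed.

Lemma sdKK c x y : sd (sd c x) (sd c y) = sd x y.
Proof. by apply/setP=> z; rewrite !in_sd; case: (z \in c); case: (z \in x); case: (z \in y). Qed.

Lemma sdA x y z : sd (sd x y) z = sd x (sd y z).
Proof. by apply/setP=> u; rewrite !in_sd; case: (u \in x); case: (u \in y); case: (u \in z). Qed.

Lemma sd0 x : sd x set0 = x.
Proof. by apply/setP=> z; rewrite !in_sd inE; case: (z \in x). Qed.

Lemma sdxx x : sd x x = set0.
Proof. by apply/setP=> z; rewrite !in_sd inE; case: (z \in x). Qed.

Lemma sd_eq0 x y : (sd x y == set0) = (x == y).
Proof.
apply/eqP/eqP=> [h|->]; last exact: sdxx.
by rewrite -(sdK x y) h sd0.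
Qed.

Lemma sd_inj c : injective (sd c).
Proof. by move=> x y h; rewrite -(sdK c x) h sdK. Qed.

Lemma hdist_sym x y : hdist x y = hdist y x.
Proof. by rewrite !hdistE sdC. Qed.

Lemma hdist0 x y : (hdist x y == 0) = (x == y).
Proof. by rewrite hdistE cards_eq0 sd_eq0. Qed.

Lemma hdist_tri x y z : hdist x z <= hdist x y + hdist y z.
Proof.
rewrite !hdistE.
have hs : sd x z \subset sd x y :|: sd y z.
  apply/subsetP=> u; rewrite !(inE, in_sd).
  by case: (u \in x); case: (u \in y); case: (u \in z).
apply: leq_trans (subset_leq_card hs) _.
by rewrite cardsU leq_subr.
Qed.

Lemma hdist1P x y : hdist x y = 1 -> exists e, y = sd x [set e].
Proof.
rewrite hdistE => /eqP /cards1P [e he]; exists e; by rewrite -he sdK.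
Qed.

Lemma hdist_flip1 x e : hdist x (sd x [set e]) = 1.
Proof. by rewrite hdistE sdK cards1. Qed.

Lemma walk_ge D a b k : walk D a b k -> hdist a b <= k.
Proof.
case=> p [hp hl hs]; subst k b.
elim: p a hp => [|y p IH] a /=; first by rewrite /hdist setDv setU0 cards0.
case/andP=> /and3P [_ _ /eqP h1] hp.
apply: leq_trans (hdist_tri a y _) _; rewrite h1 add1n ltnS; exact: IH.
Qed.

Definition Step D := forall x b, x \in D -> b \in D -> x != b ->
  exists y, [/\ y \in D, hdist x y = 1 & hdist y b < hdist x b].

Lemma Step_walk D : Step D -> forall x b, x \in D -> b \in D -> walk D x b (hdist x b).
Proof.
move=> hS x b hx hb.
move: {2}(hdist x b) (leqnn (hdist x b)) => n; elim: n x hx => [|n IH] x hx hn.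
  have : x == b by rewrite -hdist0 -leqn0.
  by move/eqP=> ->; exists [::]; rewrite /hdist setDv setU0 cards0.
case: (eqVneq x b) => [->|hxb]; first by exists [::]; rewrite /hdist setDv setU0 cards0.
have [y [hy h1 hlt]] := hS x b hx hb hxb.
have [p [hp hl hs]] := IH y hy (leq_trans (ltnSn _) (leq_trans hlt hn)).
exists (y :: p); split => //=.
  by rewrite hp /adjC hx hy h1 eqxx.
have := hdist_tri x y b; rewrite h1 hs; lia.
Qed.

Lemma isometric_Step D : isometric D <-> Step D.
Proof.
split.
  case=> _ hI x b hx hb hxb.
  have [[p [hp hl hs]] _] := hI x b hx hb.
  case: p hp hl hs => [|y p] /=; first by move=> _ hl; move: hxb; rewrite hl eqxx.
  case/andP=> /and3P [_ hy /eqP h1] hp hl hs.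
  exists y; split => //.
  have := walk_ge (ex_intro _ p (And3 hp hl (erefl _)) : walk D y b (size p)); lia.
move=> hS; split.
  by move=> x b hx hb; exists (hdist x b); exact: Step_walk.
by move=> x b hx hb; split; [exact: Step_walk | move=> k; exact: walk_ge].
Qed.

Definition Sq D := forall a b, a \in D -> b \in D -> hdist a b = 2 ->
  exists y, [/\ y \in D, hdist a y = 1 & hdist y b = 1].

Lemma weak_Sq D : weakly_isometric D -> Sq D.
Proof.
case=> _ hW a b ha hb h2.
have [[p [hp hl hs]] _] := hW a b ha hb (eq_leq h2).
rewrite h2 in hs.
case: p hp hl hs => [|y [|b' [|]]] //= /andP [/and3P [_ hy /eqP h1] /andP [/and3P [_ _ /eqP h2'] _]] hl _.
by exists y; split => //; rewrite -hl.
Qed.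

Lemma iso_weak D : isometric D -> weakly_isometric D.
Proof. by case=> h1 h2; split => // x y hx hy _; exact: h2. Qed.


Lemma cube_mem T Y x : T \subset ~: Y -> (x \in cube_of T Y) = (x :\: Y == T).
Proof.
move=> hT; apply/imsetP/eqP.
  case=> Z; rewrite powersetE => hZ ->; apply/setP=> z; rewrite !inE.
  case zT: (z \in T).
    by move/subsetP: hT => /(_ z zT); rewrite inE => ->.
  case zZ: (z \in Z); last by rewrite !andbF.
  by move/subsetP: hZ => /(_ z zZ) ->.
move=> h; exists (x :&: Y); first by rewrite powersetE subsetIr.
rewrite -h; apply/setP=> z; rewrite !inE.
by case: (z \in x); case: (z \in Y).
Qed.

Lemma cube_at_mem c Y x : (x \in cube_of (c :\: Y) Y) = (sd c x \subset Y).
Proof.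
rewrite cube_mem; last by apply/subsetP=> z; rewrite !inE => /andP [].
apply/eqP/subsetP.
  move=> h z; rewrite in_sd; apply: contraR => zY.
  by move/setP: h => /(_ z); rewrite !inE zY /= => ->.
move=> h; apply/setP=> z; rewrite !inE.
case zY: (z \in Y) => //=.
have := h z; rewrite in_sd zY.
by case: (z \in c); case: (z \in x) => // /(_ isT).
Qed.

Lemma cube_recenter T Y c : T \subset ~: Y -> c \in cube_of T Y ->
  cube_of T Y = cube_of (c :\: Y) Y.
Proof. by move=> hT; rewrite cube_mem // => /eqP ->. Qed.

Lemma cube_at_is_cube c Y : is_cube (cube_of (c :\: Y) Y).
Proof.
exists Y; exists (c :\: Y); split => //.
by apply/subsetP=> z; rewrite !inE => /andP [].
Qed.

Definition CP D c := forall Z, (forall z, z \in Z -> sd c [set z] \in D) -> sd c Z \in D.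

Lemma is_cubeP B : is_cube B <->
  [exists Y : {set X}, exists T : {set X}, (T \subset ~: Y) && (B == cube_of T Y)].
Proof.
split.
  by case=> Y [T [hT ->]]; apply/existsP; exists Y; apply/existsP; exists T; rewrite hT eqxx.
case/existsP=> Y /existsP [T /andP [hT /eqP ->]]; by exists Y; exists T.
Qed.

Lemma max_cube_ex D B : is_cube B -> B \subset D ->
  exists M, maximal_cube D M /\ B \subset M.
Proof.
move=> hB hBD.
pose P := fun M : {set {set X}} =>
  [&& [exists Y : {set X}, exists T : {set X}, (T \subset ~: Y) && (M == cube_of T Y)], B \subset M & M \subset D].
have hPB : P B by rewrite /P hBD subxx !andbT; apply/is_cubeP.
case: (@arg_maxnP _ B P (fun M => #|M|) hPB) => M /and3P [hM1 hM2 hM3] hmax.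
exists M; split => //; split => //; first exact/is_cubeP.
move=> B' hB' hB'D hMB'.
have : P B' by rewrite /P hB'D (subset_trans hM2 hMB') !andbT; apply/is_cubeP.
move/hmax => hle; apply/eqP; rewrite eq_sym eqEcard hMB'; exact: hle.
Qed.

Lemma cube_at_sub D c Y : (forall W, W \subset Y -> sd c W \in D) ->
  cube_of (c :\: Y) Y \subset D.
Proof.
move=> h; apply/subsetP=> x; rewrite cube_at_mem => hx.
by rewrite -(sdK c x); apply: h.
Qed.

Lemma corner_CP D c : corner D c -> CP D c.
Proof.
case=> hc [M0 [[hM0 hcM0] huniq]] Z hZ.
have [hc0 hsub _] := hM0.
case: hc0 => Y [T [hT hMe]].
have hM0e : M0 = cube_of (c :\: Y) Y by rewrite hMe (@cube_recenter T Y c hT) // -hMe.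
have hZY : Z \subset Y.
  apply/subsetP=> z hz.
  have hE : is_cube (cube_of (c :\: [set z]) [set z]) by apply: cube_at_is_cube.
  have hED : cube_of (c :\: [set z]) [set z] \subset D.
    apply: cube_at_sub => W; rewrite subset1 => /orP [] /eqP ->; first exact: hZ.
    by rewrite sd0.
  have [M [hM hEM]] := max_cube_ex hE hED.
  have hcE : c \in cube_of (c :\: [set z]) [set z] by rewrite cube_at_mem sdxx sub0set.
  have hcM : c \in M by move/subsetP: hEM; apply.
  have := huniq M hM hcM => hMM0.
  have : sd c [set z] \in M0.
    rewrite -hMM0; move/subsetP: hEM; apply; by rewrite cube_at_mem sdK.
  by rewrite hM0e cube_at_mem sdK sub1set.
move/subsetP: hsub; apply; by rewrite hM0e cube_at_mem sdK.
Qed.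

Lemma CP_corner D c : c \in D -> CP D c -> corner D c.
Proof.
move=> hc hCP.
pose N := [set z | sd c [set z] \in D].
pose M := cube_of (c :\: N) N.
have hMD : M \subset D.
  apply: cube_at_sub => W hW; apply: hCP => z hz.
  by move/subsetP: hW => /(_ z hz); rewrite inE.
have hcM : c \in M by rewrite cube_at_mem sdxx sub0set.
have L1 : forall B', is_cube B' -> B' \subset D -> c \in B' -> B' \subset M.
  move=> B' [Y [T [hT ->]]] hBD hcB.
  rewrite (cube_recenter hT hcB) in hBD *.
  apply/subsetP=> x; rewrite !cube_at_mem => hx.
  apply: subset_trans hx _; apply/subsetP=> y hy; rewrite inE.
  move/subsetP: hBD; apply; by rewrite cube_at_mem sdK sub1set.
have hmax : maximal_cube D M.
  split => //; first exact: cube_at_is_cube.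
  move=> B' hB' hBD hMB; apply/eqP; rewrite eqEsubset hMB andbT.
  apply: L1 => //; by move/subsetP: hMB; apply.
split => //; exists M; split => // B' [hB' hBD hmB] hcB.
have hBM := L1 B' hB' hBD hcB.
by symmetry; apply: hmB => //; exact: cube_at_is_cube.
Qed.


Lemma sd_eqr (A V U : {set X}) : (sd A V == U) = (V == sd A U).
Proof. apply/eqP/eqP => [<-|->]; by rewrite sdK. Qed.

Lemma sd1_neq0 c e : sd c [set e] != c.
Proof.
apply/eqP=> h; have : sd c [set e] == sd c set0 by rewrite sd0 h.
rewrite (inj_eq (@sd_inj c)) => /eqP /setP /(_ e); by rewrite !inE eqxx.
Qed.

Lemma sd_single2 e f : e != f -> sd [set e] [set e; f] = [set f].
Proof.
move=> hef; apply/setP=> u; rewrite !(in_sd, inE).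
case: (eqVneq u e) => [->|hue]; last by case: (u == f).
by rewrite (negbTE hef).
Qed.

Lemma sd_single2' e f : e != f -> sd [set f] [set e; f] = [set e].
Proof. move=> hef; rewrite setUC sd_single2 // eq_sym //. Qed.

Lemma Step_remove D c : c \notin D -> Step (c |: D) -> CP (c |: D) c -> Step D.
Proof.
move=> hcD hS hCP x b hx hb hxb.
have hx' : x \in c |: D by rewrite inE hx orbT.
have hb' : b \in c |: D by rewrite inE hb orbT.
have [y [hy h1 hlt]] := hS x b hx' hb' hxb.
case: (eqVneq y c) => [hyc|hyc].
  subst y.
  have hcb : c != b by apply: contraNneq hcD => ->.
  have [z [hz hz1 hzlt]] := hS c b (setU11 _ _) hb' hcb.
  have [e he] := hdist1P (etrans (hdist_sym c x) h1).
  have [f hf] := hdist1P hz1.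
  have hef : e != f.
    apply/eqP=> hef; subst f; rewrite -he in hf; subst z; lia.
  pose y' := sd c [set e; f].
  have hy'D : y' \in c |: D.
    apply: hCP => g; rewrite in_set2 => /orP [] /eqP ->; [by rewrite -he | by rewrite -hf].
  have hy'c : y' != c.
    apply/eqP=> h; have : y' == sd c set0 by rewrite sd0 h.
    rewrite /y' (inj_eq (@sd_inj c)) => /eqP /setP /(_ e); by rewrite !inE eqxx.
  exists y'; split.
  - by case/setU1P: hy'D => // h; rewrite h eqxx in hy'c.
  - by rewrite he hdistE sdKK sd_single2 // cards1.
  - have : hdist y' z = 1.
      by rewrite hf hdistE sdKK sdC sd_single2' // cards1.
    have := hdist_tri y' z b; lia.
exists y; split => //; case/setU1P: hy => // h; by rewrite h eqxx in hyc.
Qed.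

Definition trace_sub C Y : trace C Y \subset powerset Y.
Proof. by apply/subsetP=> P /imsetP [x _ ->]; rewrite powersetE subsetIr. Qed.

Lemma ample_ext D c : c \notin D -> ample D -> Step (c |: D) -> CP (c |: D) c ->
  ample (c |: D).
Proof.
move=> hcD hA hS hCP Y hY.
case: (boolP [exists d in D, d :&: Y == c :&: Y]) => [/existsP [d /andP [hd /eqP hdY]]|hno].
  have hYD : shattered D Y.
    apply/eqP; rewrite eqEsubset trace_sub /= -hY.
    apply/subsetP=> P /imsetP [x /setU1P [->|hx] ->].
      by rewrite -hdY; apply/imsetP; exists d.
    by apply/imsetP; exists x.
  have [B [hB hBD]] := hA Y hYD.
  exists B; split => //; apply: subset_trans hBD _; exact: subsetUr.
exists (cube_of (c :\: Y) Y); split.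
  exists (c :\: Y); split => //; by apply/subsetP=> z; rewrite !inE => /andP [].
apply: cube_at_sub => W hW; apply: hCP => e /(subsetP hW) heY.
have : sd (c :&: Y) [set e] \in trace (c |: D) Y.
  rewrite hY powersetE; apply/subsetP=> u; rewrite !(in_sd, inE).
  by case: (eqVneq u e) => [->|]; [by rewrite heY | by case: (u \in Y); rewrite ?andbF].
case/imsetP=> d hd hdY.
have hdc : d != c.
  apply/eqP=> hdc; subst d.
  have : sd (c :&: Y) [set e] == sd (c :&: Y) set0 by rewrite sd0 hdY.
  rewrite (inj_eq (@sd_inj _)) => /eqP /setP /(_ e); by rewrite !inE eqxx.
have hdD : d \in D by case/setU1P: hd => // h; rewrite h eqxx in hdc.
have hcd : c != d by rewrite eq_sym.
have [y [hy h1 hlt]] := hS c d (setU11 _ _) hd hcd.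
have [f hf] := hdist1P h1.
have hyc : y != c by rewrite hf sd1_neq0.
have hyD : y \in D by case/setU1P: hy => // h; rewrite h eqxx in hyc.
have hfY : f \in Y.
  apply: contraR hno => hfY; apply/existsP; exists y; rewrite hyD /=; apply/eqP/setP => u.
  rewrite hf !(in_sd, inE); case: (eqVneq u f) => [->|_]; rewrite ?(negbTE hfY) ?andbF //.
  by case: (u \in c).
have hfcd : f \in sd c d.
  apply: contraLR hlt => hf'; rewrite -leqNgt !hdistE hf (sdC c [set f]) sdA.
  have -> : sd [set f] (sd c d) = f |: sd c d.
    apply/setP=> u; rewrite !(in_sd, inE); case: (eqVneq u f) => [->|_]; last by case: (u \in c); case: (u \in d).
    by move: hf'; rewrite in_sd; case: (f \in c); case: (f \in d).
  by rewrite cardsU1 hf'.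
have hfe : f = e.
  move/setP: hdY => /(_ f); rewrite !(inE, in_sd) hfY !andbT.
  move: hfcd; rewrite in_sd; case: (f \in c); case: (f \in d) => //= _;
  by case: (eqVneq f e).
by rewrite -hfe -hf.
Qed.


Lemma sd_sub (A U Y : {set X}) : A \subset Y -> U \subset Y -> sd A U \subset Y.
Proof.
move=> /subsetP hA /subsetP hB; apply/subsetP=> u; rewrite in_sd.
by case hu: (u \in A); [move=> _; exact: hA | case hu': (u \in U) => // _; exact: hB].
Qed.

Lemma cube_at_recenter c x Y : sd c x \subset Y ->
  cube_of (c :\: Y) Y = cube_of (x :\: Y) Y.
Proof.
move=> hx; apply/setP=> u; rewrite !cube_at_mem; apply/idP/idP => h.
  by rewrite -(sdKK c x u); apply: sd_sub.
by rewrite -(sdK x u) -sdA; apply: sd_sub.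
Qed.

Lemma ample_half E (w : X) t : ample E -> ample [set x in E | (w \in x) == t].
Proof.
move=> hA Y hY.
set H := [set x in E | (w \in x) == t] in hY *.
have hHE : H \subset E by apply/subsetP=> x; rewrite inE => /andP [].
have hwY : w \notin Y.
  apply/negP=> hw.
  have h1 : [set w] \in trace H Y by rewrite hY powersetE sub1set.
  have h2 : set0 \in trace H Y by rewrite hY powersetE sub0set.
  case/imsetP: h1 => x1 hx1 e1; case/imsetP: h2 => x2 hx2 e2.
  move: hx1 hx2; rewrite !inE => /andP [_ hx1] /andP [_ hx2].
  move/setP: e1 => /(_ w); move/setP: e2 => /(_ w); rewrite !inE hw eqxx !andbT => e2 e1.
  by move: hx1 hx2; rewrite -e1 -e2 => /eqP h1' /eqP h2'; rewrite -h1' in h2'.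
have hEY : shattered E Y.
  apply/eqP; rewrite eqEsubset trace_sub /= -hY; exact: imsetS.
case: (boolP (powerset (w |: Y) \subset trace E (w |: Y))) => hY'.
  have hY'E : shattered E (w |: Y).
    by apply/eqP; rewrite eqEsubset trace_sub.
  have [B [[T' [hT' ->]] hBE]] := hA _ hY'E.
  have hT'B : T' \in cube_of T' (w |: Y).
    apply/imsetP; exists set0; rewrite ?setU0 //; by rewrite powersetE sub0set.
  rewrite (cube_recenter hT' hT'B) in hBE.
  pose x0 := if (w \in T') == t then T' else sd T' [set w].
  have hx0 : sd T' x0 \subset w |: Y.
    rewrite /x0; case: ifP => _; first by rewrite sdxx sub0set.
    by rewrite sdK sub1set setU11.
  rewrite (cube_at_recenter hx0) in hBE.
  have hx0t : (w \in x0) == t.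
    rewrite /x0; case: ifP => // /negbT; rewrite in_sd inE eqxx.
    have K : forall b t0 : bool, b != t0 -> (b != true) == t0 by do 2 case.
    exact: K.
  exists (cube_of (x0 :\: Y) Y); split.
    exists (x0 :\: Y); split => //; by apply/subsetP=> z; rewrite !inE => /andP [].
  apply/subsetP=> u; rewrite cube_at_mem => hu; rewrite inE.
  have huY' : sd x0 u \subset w |: Y by apply: subset_trans hu _; exact: subsetUr.
  rewrite (subsetP hBE) ?cube_at_mem //=.
  have : w \notin sd x0 u by apply: contra hwY; exact: (subsetP hu).
  by rewrite in_sd negbK => /eqP <-.
have [P hP hPn] := subsetPn hY'.
have [B [[T [hT ->]] hBE]] := hA _ hEY.
have hTB : T \in cube_of T Y.
  apply/imsetP; exists set0; rewrite ?setU0 //; by rewrite powersetE sub0set.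
rewrite (cube_recenter hT hTB) in hBE *.
case: (boolP ((w \in T) == t)) => hTt.
  exists (cube_of (T :\: Y) Y); split.
    exists (T :\: Y); split => //; by apply/subsetP=> z; rewrite !inE => /andP [].
  apply/subsetP=> u hu; rewrite inE (subsetP hBE) //=.
  move: hu; rewrite cube_at_mem => hu.
  have : w \notin sd T u by apply: contra hwY; exact: (subsetP hu).
  by rewrite in_sd negbK => /eqP <-.
exfalso; move/negP: hPn; apply.
rewrite powersetE in hP.
case: (boolP ((w \in P) == t)) => hPt.
  have : P :&: Y \in trace H Y by rewrite hY powersetE subsetIr.
  case/imsetP=> h; rewrite inE => /andP [hE hht] hPh.
  apply/imsetP; exists h => //; apply/setP=> u; rewrite inE.
  case: (eqVneq u w) => [->|huw].
    by rewrite setU11 andbT; move: hPt hht => /eqP -> /eqP ->.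
  move/setP: hPh => /(_ u); rewrite !inE (negbTE huw) /= => <-.
  case huY: (u \in Y); rewrite ?andbT ?andbF //.
  by apply/negbTE/negP=> huP; move/subsetP: hP => /(_ u huP); rewrite !inE (negbTE huw) huY.
apply/imsetP; exists ((T :\: Y) :|: (P :&: Y)).
  apply: (subsetP hBE); rewrite cube_at_mem; apply/subsetP=> u; rewrite !(in_sd, inE).
  by case: (u \in Y); case: (u \in T); case: (u \in P).
apply/setP=> u; rewrite !inE.
case: (eqVneq u w) => [->|huw].
  rewrite (negbTE hwY) /= ?andbF ?orbF ?andbT.
  have K : forall a b c : bool, a != c -> ~~ (b == c) -> a = b by do 3 case.
  exact: K hPt hTt.
rewrite /=; case huY: (u \in Y); first by case: (u \in T); case: (u \in P).
rewrite andbF.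
by apply/negbTE/negP=> huP; move/subsetP: hP => /(_ u huP); rewrite !inE (negbTE huw) huY.
Qed.


Definition sect D a W := [set x in D | [forall z in W, (z \in x) == (z \in a)]].

Lemma sect_sub D a W : sect D a W \subset D.
Proof. by apply/subsetP=> x; rewrite inE => /andP []. Qed.

Lemma ample_sect D a n : ample D -> forall W, #|W| <= n -> ample (sect D a W).
Proof.
move=> hA; elim: n => [|n IH] W hW.
  have -> : sect D a W = D.
    apply/setP=> x; rewrite inE; case: (x \in D) => //=.
    apply/forall_inP=> z hz; move: hW; rewrite leqn0 cards_eq0 => /eqP hW0.
    by rewrite hW0 inE in hz.
  exact: hA.
case: (set_0Vmem W) => [->|[w hw]].
  apply: IH; by rewrite cards0.
have -> : sect D a W = [set x in sect D a (W :\ w) | (w \in x) == (w \in a)].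
  apply/setP=> x; rewrite !inE; case: (x \in D) => //=.
  apply/idP/idP.
    move/forall_inP=> h; rewrite h // andbT; apply/forall_inP=> z; rewrite inE => /andP [_]; exact: h.
  case/andP=> /forall_inP h hwx; apply/forall_inP=> z hz.
  case: (eqVneq z w) => [->|hzw] //; apply: h; by rewrite !inE hzw.
apply: ample_half; apply: IH.
move: hW; rewrite (cardsD1 w W) hw; lia.
Qed.

Lemma ample_Sq D : ample D -> Sq D.
Proof.
move=> hA a b ha hb h2.
have [e [f [hef hab]]] : exists e f, e != f /\ sd a b = [set e; f].
  by apply/cards2P; rewrite -hdistE h2.
pose W := ~: [set e; f].
pose F := sect D a W.
have hF : ample F by apply: (@ample_sect D a #|W|).
have haF : a \in F by rewrite inE ha; apply/forall_inP=> z _.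
have hbF : b \in F.
  rewrite inE hb; apply/forall_inP=> z; rewrite !inE negb_or => /andP [hze hzf].
  have : z \notin sd a b by rewrite hab !inE negb_or hze hzf.
  by rewrite in_sd negbK eq_sym.
have heab : (e \in a) != (e \in b) by rewrite -in_sd hab !inE eqxx.
have hsh : shattered F [set e].
  apply/eqP; rewrite eqEsubset trace_sub powerset1 /=.
  have hx1 : forall x, e \in x -> x :&: [set e] = [set e].
    move=> x hx; apply/setP=> u; rewrite !inE; case: (eqVneq u e) => [->|]; by rewrite ?hx ?andbF.
  have hx0 : forall x, e \notin x -> x :&: [set e] = set0.
    move=> x hx; apply/setP=> u; rewrite !inE; case: (eqVneq u e) => [->|]; by rewrite ?(negbTE hx) ?andbF.
  apply/subsetP=> P; rewrite !inE => /orP [] /eqP ->; apply/imsetP.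
    case ea: (e \in a).
      exists b => //; rewrite hx0 //; by move: heab; rewrite ea; case: (e \in b).
    by exists a => //; rewrite hx0 // ea.
  case ea: (e \in a); first by exists a => //; rewrite hx1.
  exists b => //; rewrite hx1 //; by move: heab; rewrite ea; case: (e \in b).
have [B [[T [hT ->]] hBF]] := hF _ hsh.
have hTB : T \in cube_of T [set e].
  apply/imsetP; exists set0; rewrite ?setU0 //; by rewrite powersetE sub0set.
have hTF : T \in F by apply: (subsetP hBF).
have heT : e \notin T by apply/negP=> heT; have := subsetP hT e heT; rewrite !inE eqxx.
pose Q := if f \in sd a T then [set f] else [set e].
pose y := sd a Q.
have hyB : y \in cube_of T [set e].
  rewrite cube_mem //; apply/eqP/setP=> u; rewrite !inE.
  case: (eqVneq u e) => [->|hue] /=; first by rewrite (negbTE heT).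
  rewrite /y /Q in_sd; case: (eqVneq u f) => [->|huf].
    by case fa: (f \in a); case fT: (f \in T); rewrite /= !inE ?eqxx ?(eq_sym f e) ?(negbTE hef).
  have huW : u \in W by rewrite !inE negb_or hue huf.
  move: hTF; rewrite inE => /andP [_ /forall_inP /(_ u huW) /eqP ->].
  by case: ifP => _; rewrite !inE ?(negbTE huf) ?(negbTE hue) //; case: (u \in a).
exists y; split.
- by apply: (subsetP (sect_sub D a W)); apply: (subsetP hBF).
- by rewrite /y hdistE sdK /Q; case: ifP => _; rewrite cards1.
- rewrite /y hdistE -{1}(sdK a b) sdKK hab /Q; case: ifP => _.
    by rewrite sd_single2' // cards1.
  by rewrite sd_single2 // cards1.
Qed.


Definition bad D c Z := 2 <= #|Z| /\
  forall W, W \subset Z -> (sd c W \in D) = (W != set0) && (W != Z).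

Lemma sd_single_single e f : e != f -> sd [set e] [set f] = [set e; f].
Proof.
move=> hef; apply/setP=> u; rewrite !(in_sd, inE).
case: (eqVneq u e) => [->|_]; first by rewrite (negbTE hef).
by case: (u == f).
Qed.

Lemma set1_neq (e : X) Z : 2 <= #|Z| -> [set e] != Z.
Proof. by move=> h; apply/eqP=> hZ; rewrite -hZ cards1 in h. Qed.

Lemma nobad2 D c Z : Sq D -> #|Z| = 2 -> ~ bad D c Z.
Proof.
move=> hSq hZ2 [h2 hb].
have [e [f [hef hZ]]] : exists e f, e != f /\ Z = [set e; f] by apply/cards2P; rewrite hZ2.
have hsubE : [set e] \subset Z by rewrite hZ sub1set !inE eqxx.
have hsubF : [set f] \subset Z by rewrite hZ sub1set !inE eqxx orbT.
have hE : sd c [set e] \in D by rewrite hb // (set1_neq e h2) andbT; apply/set0Pn; exists e; rewrite inE.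
have hF : sd c [set f] \in D by rewrite hb // (set1_neq f h2) andbT; apply/set0Pn; exists f; rewrite inE.
have hd2 : hdist (sd c [set e]) (sd c [set f]) = 2 by rewrite hdistE sdKK sd_single_single // cards2 hef.
have [y [hy h1 h1']] := hSq _ _ hE hF hd2.
pose U := sd c y.
have hyU : y = sd c U by rewrite sdK.
rewrite hyU hdistE sdKK in h1; rewrite hyU hdistE sdKK sdC in h1'.
move/eqP/cards1P: h1 => [g hg]; move/eqP/cards1P: h1' => [h hh].
have hUg : U = sd [set e] [set g] by rewrite -hg sdK.
have hUh : U = sd [set f] [set h] by rewrite -hh sdK.
suff [hUZ hU] : U \subset Z /\ ((U == set0) || (U == Z)).
  move: hy; rewrite hyU hb //; by case/orP: hU => ->; rewrite ?andbF.
case: (eqVneq g e) => [hge|hge].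
  have -> : U = set0 by rewrite hUg hge sdxx.
  by rewrite sub0set eqxx.
have heU : e \in U by rewrite hUg in_sd !inE eqxx (eq_sym e g) (negbTE hge).
have heh : h = e.
  move: heU; rewrite hUh in_sd !inE (negbTE hef) /=; by case: (eqVneq e h) => // ->.
have -> : U = Z by rewrite hUh heh sd_single_single 1?eq_sym // hZ setUC.
by rewrite subxx eqxx orbT.
Qed.

Section Chain.
Variable s : seq {set X}.
Hypothesis hu : uniq s.

Definition Ci i := [set c in take i s].

Lemma Ci0 : Ci 0 = set0.
Proof. by apply/setP=> x; rewrite !inE take0. Qed.

Lemma CiS j : j < size s -> Ci j.+1 = nth set0 s j |: Ci j.
Proof.
move=> hj; apply/setP=> x; rewrite !inE (take_nth set0 hj) mem_rcons in_cons //.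
Qed.

Lemma Ci_notin j : j < size s -> nth set0 s j \notin Ci j.
Proof.
move=> hj; have := take_uniq j.+1 hu; rewrite (take_nth set0 hj) rcons_uniq => /andP [h _].
by rewrite inE.
Qed.

Lemma nobad (hSq : forall j, j <= size s -> Sq (Ci j)) :
  forall n j c Z, #|Z| <= n -> j <= size s -> ~ bad (Ci j) c Z.
Proof.
elim=> [|n IHn] j c Z hZn hj hbad.
  by case: hbad => h2 _; lia.
case: (eqVneq #|Z| 2) => [hZ2|hZ2]; first exact: (nobad2 (hSq j hj) hZ2 hbad).
have hZ3 : 3 <= #|Z| by case: hbad => h2 _; lia.
elim: j hj c Z hZn hbad hZ2 hZ3 => [|j IHj] hj c Z hZn [h2 hb] hZ2 hZ3.
  have [e he] : exists e, e \in Z by apply/set0Pn; rewrite -cards_eq0; lia.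
  have := hb [set e]; rewrite Ci0 inE sub1set he (set1_neq e h2) andbT => /(_ isT).
  by move/esym => /set0Pn; case; exists e; rewrite inE.
have hjs : j < size s by [].
pose x := nth set0 s j.
have hxn : x \notin Ci j by exact: Ci_notin.
rewrite CiS // in hb.
case hxZ: (sd c x \subset Z); last first.
  apply: (IHj (ltnW hj) c Z hZn) => //; split => // W hW.
  rewrite -hb //; case: (eqVneq (sd c W) x) => [hWx|hWx].
    by move: hxZ; rewrite -hWx sdK hW.
  by rewrite in_setU1 (negbTE hWx).
pose W0 := sd c x.
have hxW : x = sd c W0 by rewrite sdK.
have hW0 : (W0 != set0) && (W0 != Z) by rewrite -hb //; rewrite /W0 sdK; exact: setU11.
case/andP: hW0 => hW00 hW0Z.
have hW0p : W0 \proper Z by rewrite properEneq hW0Z hxZ.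
have hW0c := proper_card hW0p.
case: (eqVneq #|W0| 1) => [hW01|hW01].
  have [w hw] : exists w, W0 = [set w] by apply/cards1P; rewrite hW01.
  have hwZ : w \in Z by move: hxZ; rewrite -/W0 hw sub1set.
  apply: (IHn j x (Z :\ w) _ (ltnW hj)).
    by move: hZn; rewrite (cardsD1 w Z) hwZ; lia.
  split; first by move: hZ3; rewrite (cardsD1 w Z) hwZ; lia.
  move=> V hV.
  have hwV : w \notin V by apply/negP=> /(subsetP hV); rewrite !inE eqxx.
  have hsub : sd [set w] V \subset Z.
    apply: sd_sub; first by rewrite sub1set.
    by apply: subset_trans hV _; exact: subsetDl.
  have hxV : sd x V = sd c (sd [set w] V) by rewrite hxW hw sdA.
  have := hb _ hsub; rewrite -hxV in_setU1 -/x.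
  have -> : (sd x V == x) = (V == set0).
    by rewrite -{2}(sd0 x) (inj_eq (@sd_inj x)).
  case: (eqVneq V set0) => [->|hV0] /=.
    by rewrite !sd0 (negbTE hxn).
  move=> ->.
  have -> : (sd [set w] V != set0) = true.
    rewrite sd_eq0; apply/negP=> /eqP hwV'; by rewrite -hwV' inE eqxx in hwV.
  rewrite sd_eqr /=.
  have -> : sd [set w] Z = Z :\ w.
    apply/setP=> u; rewrite !(in_sd, inE); case: (eqVneq u w) => [->|_]; [by rewrite hwZ | by case: (u \in Z)].
  by [].
apply: (IHn j c W0 _ (ltnW hj)).
  by lia.
have hW0pos : 0 < #|W0| by rewrite card_gt0.
split; first by move: hW01 hW0pos; case: #|W0| => [|[|k]].
move=> V hV.
have hVZ : V \subset Z := subset_trans hV hxZ.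
have := hb _ hVZ; rewrite in_setU1 -/x.
case: (eqVneq V W0) => [->|hVW0].
  by rewrite -hxW eqxx (negbTE hxn) /= andbF.
have -> : (sd c V == x) = false.
  by apply/negbTE; rewrite hxW (inj_eq (@sd_inj c)).
move=> /= ->.
have -> : (V != Z) = true.
  apply/negP=> /eqP hVZ'; subst V; move: hW0Z; rewrite eqEsubset hV hxZ //.
by rewrite /= !andbT.
Qed.

Lemma CP_chain (hnb : forall j c Z, j <= size s -> ~ bad (Ci j) c Z) i :
  i < size s -> CP (Ci i.+1) (nth set0 s i).
Proof.
move=> hi; set x := nth set0 s i.
have hxC : x \in Ci i.+1 by rewrite CiS // setU11.
have hxn : x \notin Ci i by exact: Ci_notin.
suff H : forall n Z, #|Z| <= n -> (forall z, z \in Z -> sd x [set z] \in Ci i.+1) ->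
  sd x Z \in Ci i.+1 by move=> Z; exact: H.
elim=> [|n IH] Z hZn hZ.
  by move: hZn; rewrite leqn0 cards_eq0 => /eqP ->; rewrite sd0.
case: (eqVneq Z set0) => [->|hZ0]; first by rewrite sd0.
case: (eqVneq #|Z| 1) => [hZ1|hZ1].
  have [z hz] : exists z, Z = [set z] by apply/cards1P; rewrite hZ1.
  by rewrite hz; apply: hZ; rewrite hz set11.
have hZ2 : 2 <= #|Z|.
  have : 0 < #|Z| by rewrite card_gt0.
  by move: hZ1; case: #|Z| => [|[|k]].
apply/negPn/negP => hn.
apply: (hnb i x Z (ltnW hi)); split => // W hW.
case: (eqVneq W Z) => [->|hWZ].
  rewrite andbF; apply/negbTE; apply: contra hn; rewrite CiS // => h.
  by rewrite in_setU1 h orbT.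
have hWp : W \proper Z by rewrite properEneq hWZ hW.
have hWin : sd x W \in Ci i.+1.
  apply: IH; first by have := proper_card hWp; lia.
  by move=> z hz; apply: hZ; exact: (subsetP hW).
move: hWin; rewrite CiS // in_setU1 -/x andbT.
case: (eqVneq W set0) => [->|hW0].
  by rewrite sd0 (negbTE hxn).
have -> : (sd x W == x) = false.
  by apply/negbTE; rewrite -{2}(sd0 x) (inj_eq (@sd_inj x)).
by [].
Qed.

End Chain.

End S.

Lemma ample0 (X : finType) : ample (set0 : {set {set X}}).
Proof.
move=> Y hY; exfalso.
have : set0 \in powerset Y by rewrite powersetE sub0set.
by rewrite -hY /trace imset0 inE.
Qed.

Lemma Sq0 (X : finType) : Sq (set0 : {set {set X}}).
Proof. by move=> a b; rewrite inE. Qed.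

Unset Implicit Arguments.

Theorem proposition4p1 (X : finType) (C : {set {set X}}) (s : seq {set X}) :
  isometric C -> uniq s -> [set c in s] = C ->
  [<-> (forall i, 1 <= i <= size s -> ample [set c in take i s]);
       (forall i, 1 <= i <= size s -> corner [set c in take i s] (nth set0 s i.-1));
       (forall i, 1 <= i <= size s -> isometric [set c in take i s]);
       (forall i, 1 <= i <= size s -> weakly_isometric [set c in take i s])].
Proof.
move=> hC hu hsC.
have hCm : Ci s (size s) = C by rewrite /Ci take_size.
have hA : (forall j, j <= size s -> Sq (Ci s j)) ->
    forall i, 1 <= i <= size s -> corner (Ci s i) (nth set0 s i.-1).
  move=> hSq [|k] // /andP [_ hk] /=.
  apply: CP_corner; first by rewrite CiS // setU11.
  apply: CP_chain => // j c Z hj.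
  exact: (nobad hu hSq (leqnn #|Z|) hj).
have hB : (forall i, 1 <= i <= size s -> corner (Ci s i) (nth set0 s i.-1)) ->
    forall i, i <= size s -> Step (Ci s i).
  move=> h2.
  suff H : forall k, k <= size s -> Step (Ci s (size s - k)).
    by move=> i hi; have := H (size s - i) (leq_subr _ _); rewrite subKn.
  elim=> [|k IH] hk; first by rewrite subn0 hCm; apply/isometric_Step.
  have hk' : size s - k.+1 < size s by lia.
  have Hs : (size s - k.+1).+1 = size s - k by lia.
  have hSt := IH (ltnW hk); rewrite -Hs in hSt.
  have hcor := h2 (size s - k.+1).+1; rewrite /= in hcor.
  have hcor' := corner_CP (hcor (ltac:(rewrite Hs; lia))).
  rewrite CiS // in hSt hcor'.
  exact: Step_remove (Ci_notin hu hk') hSt hcor'.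
have hCc : (forall i, 1 <= i <= size s -> corner (Ci s i) (nth set0 s i.-1)) ->
    forall i, i <= size s -> ample (Ci s i).
  move=> h2; elim=> [|i IH] hi; first by rewrite Ci0; exact: ample0.
  have hSt := hB h2 _ hi.
  have hcp := corner_CP (h2 i.+1 hi); rewrite /= in hcp.
  rewrite CiS // in hSt hcp *.
  exact: ample_ext (Ci_notin hu hi) (IH (ltnW hi)) hSt hcp.
tfae.
- move=> h1; apply: hA => j hj.
  case: j hj => [|j] hj; first by rewrite Ci0; exact: Sq0.
  exact: ample_Sq (h1 j.+1 hj).
- move=> h2 i /andP [_ hi]; apply/isometric_Step; exact: hB.
- move=> h3 i hi; apply: iso_weak; exact: h3.
- move=> h4 i /andP [_ hi]; apply: hCc => //; apply: hA => j hj.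
  case: j hj => [|j] hj; first by rewrite Ci0; exact: Sq0.
  exact: weak_Sq (h4 j.+1 hj).
Qed.
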